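(* Let $K$ be a field and let $G\in K^{m\times p}(s)$ be written as $G=W_2+P_2D_2^{-1}Q_2$, where $W_2\in K^{m\times p}(s)$ is strictly proper, $P_2\in K^{m\times n_2}_\infty(s)$ and $Q_2\in K^{n_2\times p}_\infty(s)$ are proper, and $D_2\in K^{n_2\times n_2}[s]$ is a nonsingular polynomial matrix. Write $\pi_+G=\sum_{\nu=0}^tG_\nu s^\nu$ with $G_\nu\in K^{m\times p}$. Define the $K$-linear maps $B_2:K^p\to U^{D_2}$ by $B_2\xi=\rho^{D_2}(Q_2\xi)$, $N_2:U^{D_2}\to U^{D_2}$ by $N_2\bar x=s^{-1}\cdot\bar x$, and $C_2:U^{D_2}\to K^m$ by $C_2\bar x=-\bigl(P_2D_2^{-1}\bar x\bigr)_0$. Then $G_\nu=-C_2N_2^\nu B_2$ for $\nu=0,1,\dots,t$, $N_2$ is nilpotent, and $$\sum_{\nu=0}^tG_\nu s^\nu=C_2(sN_2-I)^{-1}B_2.$$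
   Context: $K(s)$ denotes the field of rational functions over $K$. A rational function $f$ is proper if $f=0$ or $f=p/q$ with $p,q\in K[s]$, $q\ne0$, $\deg p\le\deg q$, and strictly proper if $f=0$ or $\deg p<\deg q$; $K_\infty(s)$ is the ring of proper rational functions, with vectors/matrices $K^n_\infty(s)$, $K^{m\times r}_\infty(s)$. One has $K(s)=K[s]\oplus s^{-1}K_\infty(s)$; $\pi_+:K(s)\to K[s]$ is the projection onto the polynomial part, extended entrywise, and $(f)_0=(\pi_+f)(0)$ entrywise. For nonsingular $D\in K^{n\times n}[s]$, $\rho^D:K^n_\infty(s)\to K^n[s]$ is $\rho^Dx=D\pi_+(D^{-1}x)$, $\bar x=\rho^Dx$, and $U^D=\operatorname{Im}\rho^D$ is a $K_\infty(s)$-module (and finite-dimensional $K$-vector space) via $q\cdot\bar x=\overline{qx}$. *)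

(* Defs.v *)
(* Rational functions K(s) are modelled by {fraction {poly K}}. *)
From HB Require Import structures.
From mathcomp Require Import all_boot all_order all_algebra.
From Stdlib Require Import ClassicalEpsilon.
Set Implicit Arguments. Unset Strict Implicit. Unset Printing Implicit Defensive.
Import GRing.Theory.
Local Open Scope ring_scope.

Notation RF K := {fraction {poly K}}.

Section Defs.
Variable K : fieldType.

Definition tof (p : {poly K}) : RF K := tofrac p.

Definition sF : RF K := tof 'X.

(* f is proper: f = 0 or f = p/q with q <> 0, deg p <= deg q
   (size = deg + 1, and p = 0 covers f = 0) *)
Definition properf (f : RF K) : Prop :=
  exists p q : {poly K}, q != 0 /\ (size p <= size q)%N /\ f = tof p / tof q.

Definition sproperf (f : RF K) : Prop :=
  exists p q : {poly K}, q != 0 /\ (size p < size q)%N /\ f = tof p / tof q.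

Definition proper_mx m n (M : 'M[RF K]_(m, n)) : Prop :=
  forall i j, properf (M i j).
Definition sproper_mx m n (M : 'M[RF K]_(m, n)) : Prop :=
  forall i j, sproperf (M i j).

(* pi_+ : projection onto the polynomial part along the strictly proper part,
   i.e. the (unique) polynomial r with f - r strictly proper *)
Definition pip (f : RF K) : {poly K} :=
  epsilon (inhabits 0) (fun r : {poly K} => sproperf (f - tof r)).

Definition pip_mx m n (M : 'M[RF K]_(m, n)) : 'M[{poly K}]_(m, n) :=
  map_mx pip M.

(* (f)_0 = (pi_+ f)(0), entrywise *)
Definition at0_mx m n (M : 'M[RF K]_(m, n)) : 'M[K]_(m, n) :=
  map_mx (fun f => (pip f).[0]) M.

Definition polyF m n (M : 'M[{poly K}]_(m, n)) : 'M[RF K]_(m, n) :=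
  map_mx tof M.

Definition constF m n (M : 'M[K]_(m, n)) : 'M[RF K]_(m, n) :=
  map_mx (fun a => tof a%:P) M.

Definition rho n (D : 'M[{poly K}]_n) (x : 'cV[RF K]_n) : 'cV[{poly K}]_n :=
  D *m pip_mx (invmx (polyF D) *m x).

(* U^D = Im rho^D (on proper vectors) *)
Definition inU n (D : 'M[{poly K}]_n) (v : 'cV[{poly K}]_n) : Prop :=
  exists x, proper_mx x /\ rho D x = v.

Definition rho_pre n (D : 'M[{poly K}]_n) (v : 'cV[{poly K}]_n) : 'cV[RF K]_n :=
  epsilon (inhabits 0) (fun x => proper_mx x /\ rho D x = v).

(* module action q . xbar = rho^D (q x) where xbar = rho^D x *)
Definition Uact n (D : 'M[{poly K}]_n) (q : RF K) (v : 'cV[{poly K}]_n)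
  : 'cV[{poly K}]_n := rho D (q *: rho_pre D v).

Definition Bmap n p (D : 'M[{poly K}]_n) (Q : 'M[RF K]_(n, p)) (xi : 'cV[K]_p)
  : 'cV[{poly K}]_n := rho D (Q *m constF xi).

Definition Nmap n (D : 'M[{poly K}]_n) (v : 'cV[{poly K}]_n) : 'cV[{poly K}]_n :=
  Uact D sF^-1 v.

Definition Cmap m n (P : 'M[RF K]_(m, n)) (D : 'M[{poly K}]_n)
  (v : 'cV[{poly K}]_n) : 'cV[K]_m :=
  - at0_mx (P *m invmx (polyF D) *m polyF v).

Definition Gcoef m p (G : 'M[RF K]_(m, p)) (nu : nat) : 'M[K]_(m, p) :=
  map_mx (fun f => (pip f)`_nu) G.

Definition monvec m (c : 'cV[K]_m) (nu : nat) : 'cV[{poly K}]_m :=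
  map_mx (fun a => a%:P * 'X^nu) c.

End Defs.

(* Main.v *)
Require Import Defs.
From HB Require Import structures.
From mathcomp Require Import all_boot all_order all_algebra.
From mathcomp Require Import zify ring.
From Stdlib Require Import ClassicalEpsilon.
Set Implicit Arguments. Unset Strict Implicit. Unset Printing Implicit Defensive.
Import GRing.Theory.
Local Open Scope ring_scope.

Lemma fracE (R : idomainType) (x : {fraction R}) :
  exists a b, b != 0 /\ x = tofrac a / tofrac b.
Proof.
move: x; apply: (@quotW _ (FracField.type R)) => r.
have dr := denom_ratioP r.
exists \n_r, \d_r; split=> //.
have hd : tofrac (\d_r) != 0 :> {fraction R} by rewrite tofrac_eq0.
apply/eqP; rewrite -(can2_eq (mulfK hd) (divfK hd)); apply/eqP.
unlock tofrac; rewrite !piE.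
apply/eqmodP; rewrite /= FracField.equivfE /FracField.mulf /=.
rewrite !numden_Ratio ?(oner_eq0, mulf_neq0, denom_ratioP) //.
by rewrite !mulr1 mulrC.
Qed.

Lemma aux1 x a b d : (0 < d -> a < b -> x <= (a + d).-1 -> x < (b + d).-1)%N.
Proof. lia. Qed.
Lemma aux2 x a b c d : (0 < b -> 0 < d -> a <= b -> c < d -> x <= (a + c).-1 -> x < (b + d).-1)%N.
Proof. lia. Qed.

Lemma aux3 x a b c d : (a <= b -> c <= d -> x <= (a + c).-1 -> x <= (b + d).-1)%N.
Proof. lia. Qed.
Lemma aux4 r b : (0 < r -> b <= (r + b).-1)%N.
Proof. lia. Qed.

Lemma fadd (F : fieldType) (A B C E : F) : B != 0 -> E != 0 ->
  A / B + C / E = (A * E + C * B) / (B * E).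
Proof. by move=> hB hE; field; rewrite hB hE. Qed.
Lemma fmul (F : fieldType) (A B C E : F) : B != 0 -> E != 0 ->
  A / B * (C / E) = (A * C) / (B * E).
Proof. by move=> hB hE; field; rewrite hB hE. Qed.
Lemma fdivE (F : fieldType) (Q B R : F) : B != 0 -> (Q * B + R) / B - Q = R / B.
Proof. by move=> hB; field. Qed.
Lemma fshift (F : fieldType) (u e T Dr : F) : u != 0 ->
  u^-1 * (e + T + Dr * u) - Dr = u^-1 * e + u^-1 * T.
Proof. by move=> hu; field. Qed.

Section Scal.
Variable K : fieldType.
Local Notation sp := (@sproperf K).
Local Notation pr := (@properf K).
Local Notation tof := (@tof K).

Lemma tofE p : tof p = tofrac p. Proof. by []. Qed.
Lemma tof_neq0 p : p != 0 -> tof p != 0.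
Proof. by rewrite tofE tofrac_eq0. Qed.
Lemma tof_inj : injective tof.
Proof. by move=> a b /eqP; rewrite !tofE tofrac_eq => /eqP. Qed.

Lemma sp_pr f : sp f -> pr f.
Proof. by case=> a [b [h1 [h2 h3]]]; exists a, b; split=> //; split=> //; apply: ltnW. Qed.

Lemma sp0 : sp 0.
Proof. by exists 0, 1; rewrite oner_eq0 size_poly0 size_poly1 tofE rmorph0 mul0r. Qed.

Lemma pr1 : pr 1.
Proof. by exists 1, 1; rewrite oner_eq0 tofE rmorph1 divr1. Qed.

Lemma spD f g : sp f -> sp g -> sp (f + g).
Proof.
case=> a [b [hb [hab ->]]]; case=> c [d [hd [hcd ->]]].
exists (a * d + c * b), (b * d); split; first by rewrite mulf_neq0.
split.
  rewrite size_mul //; apply: (leq_ltn_trans (size_polyD _ _)).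
  have hb0 : (0 < size b)%N by rewrite size_poly_gt0.
  have hd0 : (0 < size d)%N by rewrite size_poly_gt0.
  rewrite gtn_max; apply/andP; split.
    exact: (aux1 hd0 hab (size_polyMleq a d)).
  by rewrite [(size b + _)%N]addnC; exact: (aux1 hb0 hcd (size_polyMleq c b)).
have hb' := tof_neq0 hb; have hd' := tof_neq0 hd.
by rewrite (fadd _ _ hb' hd') /tof rmorphD !rmorphM.
Qed.

Lemma spN f : sp f -> sp (- f).
Proof.
case=> a [b [hb [hab ->]]]; exists (- a), b; split=> //; split; first by rewrite size_polyN.
by rewrite !tofE rmorphN mulNr.
Qed.

Lemma spB f g : sp f -> sp g -> sp (f - g).
Proof. by move=> hf hg; apply: spD => //; apply: spN. Qed.

Lemma prM f g : pr f -> pr g -> pr (f * g).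
Proof.
case=> a [b [hb [hab ->]]]; case=> c [d [hd [hcd ->]]].
exists (a * c), (b * d); split; first by rewrite mulf_neq0.
split.
  by rewrite [size (b * d)]size_mul //; exact: aux3 hab hcd (size_polyMleq a c).
have hb' := tof_neq0 hb; have hd' := tof_neq0 hd.
by rewrite (fmul _ _ hb' hd') /tof !rmorphM.
Qed.

Lemma prspM f g : pr f -> sp g -> sp (f * g).
Proof.
case=> a [b [hb [hab ->]]]; case=> c [d [hd [hcd ->]]].
exists (a * c), (b * d); split; first by rewrite mulf_neq0.
split.
  rewrite [size (b * d)]size_mul //; apply: aux2 (size_polyMleq a c) => //.
    by rewrite size_poly_gt0.
  by rewrite size_poly_gt0.
have hb' := tof_neq0 hb; have hd' := tof_neq0 hd.
by rewrite (fmul _ _ hb' hd') /tof !rmorphM.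
Qed.

Lemma spprM f g : sp f -> pr g -> sp (f * g).
Proof. by move=> hf hg; rewrite mulrC; apply: prspM. Qed.

Lemma prC c : pr (tof c%:P).
Proof.
exists c%:P, 1; rewrite oner_eq0 size_poly1 size_polyC !tofE rmorph1 divr1.
by case: (c != 0).
Qed.

Lemma prX f k : pr f -> pr (f ^+ k).
Proof. by move=> hf; elim: k => [|k IH]; [rewrite expr0; exact: pr1 | rewrite exprS; exact: prM]. Qed.

Lemma sF_neq0 : sF K != 0.
Proof. by rewrite /sF tof_neq0 // polyX_eq0. Qed.

Lemma prsFV : pr (sF K)^-1.
Proof.
exists 1, 'X; rewrite polyX_eq0 size_poly1 size_polyX; split=> //; split=> //.
by rewrite tofE rmorph1 mul1r.
Qed.

Lemma sFVX k : (sF K)^-1 ^+ k = (tof 'X^k)^-1.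
Proof. by rewrite exprVn /sF !tofE rmorphXn. Qed.

Lemma sp_polyX (a : {poly K}) k : (size a <= k)%N -> sp ((sF K)^-1 ^+ k * tof a).
Proof.
move=> ha; exists a, 'X^k; rewrite sFVX size_polyXn monic_neq0 ?monicXn //.
by split=> //; split=> //; rewrite mulrC.
Qed.

Lemma sp_poly_eq0 r : sp (tof r) -> r = 0.
Proof.
case=> a [b [hb [hab]]] /eqP; have hb' := tof_neq0 hb.
rewrite -(can2_eq (mulfK hb') (divfK hb')) tofE -rmorphM /= -tofE => /eqP /tof_inj e.
apply/eqP; apply: contraTT hab => hr; rewrite -e size_mul // -leqNgt.
by apply: aux4; rewrite size_poly_gt0.
Qed.

Lemma pip_ex f : exists r, sp (f - tof r).
Proof.
have [a [b [hb ->]]] := fracE f.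
exists (a %/ b); exists (a %% b), b; split=> //; split; first by rewrite ltn_modp.
have hb' := tof_neq0 hb.
have -> : tofrac a = tof (a %/ b) * tof b + tof (a %% b) :> RF K.
  by rewrite {1}(divp_eq a b) /tof rmorphD rmorphM.
exact: fdivE.
Qed.

Lemma pipP f : sp (f - tof (pip f)).
Proof. exact: (epsilon_spec (inhabits 0) (fun r => sp (f - tof r)) (pip_ex f)). Qed.

Lemma pip_uniq f r : sp (f - tof r) -> pip f = r.
Proof.
move=> h; apply/eqP; rewrite -subr_eq0; apply/eqP; apply: sp_poly_eq0.
have -> : tof (pip f - r) = (f - tof r) - (f - tof (pip f)).
  by rewrite !tofE rmorphB /= [RHS]addrC opprB addrA subrK.
by apply: spB => //; apply: pipP.
Qed.

Lemma pip_speq f g : sp (f - g) -> pip f = pip g.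
Proof.
move=> h; apply: pip_uniq.
have -> : f - tof (pip g) = (f - g) + (g - tof (pip g)) by rewrite addrA subrK.
by apply: spD => //; apply: pipP.
Qed.

Lemma pip_sp f : sp f -> pip f = 0.
Proof. by move=> h; apply: pip_uniq; rewrite tofE rmorph0 subr0. Qed.

Lemma pip0 : pip (0 : RF K) = 0.
Proof. exact: pip_sp sp0. Qed.

Lemma pipD (f g : RF K) : pip (f + g) = pip f + pip g.
Proof.
apply: pip_uniq.
have -> : f + g - tof (pip f + pip g) = (f - tof (pip f)) + (g - tof (pip g)).
  by rewrite tofE rmorphD /= -!tofE opprD addrACA.
by apply: spD; apply: pipP.
Qed.

Lemma pip_sum I (r : seq I) (P : pred I) (F : I -> RF K) :
  pip (\sum_(i <- r | P i) F i) = \sum_(i <- r | P i) pip (F i).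
Proof. by apply: (big_rec2 (fun x y => pip x = y)) => [|i x y _ <-]; [exact: pip0 | exact: pipD]. Qed.

Lemma pipMC f c : pip (f * tof c%:P) = pip f * c%:P.
Proof.
apply: pip_uniq.
have -> : f * tof c%:P - tof (pip f * c%:P) = (f - tof (pip f)) * tof c%:P.
  by rewrite mulrBl /tof rmorphM.
by apply: spprM; [apply: pipP | apply: prC].
Qed.

Lemma pip_shift f k : (pip ((sF K)^-1 ^+ k * f)).[0] = (pip f)`_k.
Proof.
set r := pip f.
have e : f = (f - tof r) + tof (take_poly k r) + tof (drop_poly k r) * tof 'X^k.
  by rewrite -addrA !tofE -rmorphM -rmorphD /= poly_take_drop subrK.
have -> : pip ((sF K)^-1 ^+ k * f) = drop_poly k r.
  apply: pip_uniq; rewrite {1}e.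
  have -> : (sF K)^-1 ^+ k * (f - tof r + tof (take_poly k r) + tof (drop_poly k r) * tof 'X^k)
     - tof (drop_poly k r) = (sF K)^-1 ^+ k * (f - tof r) + (sF K)^-1 ^+ k * tof (take_poly k r).
    have hX : tof 'X^k != 0 by rewrite tof_neq0 // monic_neq0 ?monicXn.
    by rewrite sFVX fshift.
  apply: spD; first by apply: prspM; [apply: prX; apply: prsFV | apply: pipP].
  by apply: sp_polyX; apply: size_take_poly.
by rewrite horner_coef0 coef_drop_poly add0n.
Qed.

End Scal.

Section Mx.
Variable K : fieldType.
Local Notation sp := (@sproperf K).
Local Notation pr := (@properf K).
Local Notation tof := (@tof K).
Local Notation spmx := (@sproper_mx K).
Local Notation prmx := (@proper_mx K).

Lemma sum_sp I (r : seq I) (P : pred I) (F : I -> RF K) :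
  (forall i, P i -> sp (F i)) -> sp (\sum_(i <- r | P i) F i).
Proof. by move=> h; apply: big_ind => //; [apply: sp0 | apply: spD]. Qed.
Lemma prD f g : pr f -> pr g -> pr (f + g).
Proof.
case=> a [b [hb [hab ->]]]; case=> c [d [hd [hcd ->]]].
exists (a * d + c * b), (b * d); split; first by rewrite mulf_neq0.
split.
  rewrite size_mul //; apply: (leq_trans (size_polyD _ _)).
  have hb0 : (0 < size b)%N by rewrite size_poly_gt0.
  have hd0 : (0 < size d)%N by rewrite size_poly_gt0.
  rewrite geq_max; apply/andP; split.
    exact: (aux3 hab (leqnn _) (size_polyMleq a d)).
  by rewrite [(size b + _)%N]addnC; exact: (aux3 hcd (leqnn _) (size_polyMleq c b)).
have hb' := tof_neq0 hb; have hd' := tof_neq0 hd.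
by rewrite (fadd _ _ hb' hd') /tof rmorphD !rmorphM.
Qed.

Lemma sum_pr I (r : seq I) (P : pred I) (F : I -> RF K) :
  (forall i, P i -> pr (F i)) -> pr (\sum_(i <- r | P i) F i).
Proof. by move=> h; apply: big_ind => //; [apply/sp_pr/sp0 | apply: prD]. Qed.

Lemma spmxD m n (A B : 'M[RF K]_(m, n)) : spmx A -> spmx B -> spmx (A + B).
Proof. by move=> hA hB i j; rewrite mxE; apply: spD. Qed.
Lemma spmxB m n (A B : 'M[RF K]_(m, n)) : spmx A -> spmx B -> spmx (A - B).
Proof. by move=> hA hB i j; rewrite !mxE; apply: spB. Qed.
Lemma spmxZ m n q (A : 'M[RF K]_(m, n)) : pr q -> spmx A -> spmx (q *: A).
Proof. by move=> hq hA i j; rewrite mxE; apply: prspM. Qed.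
Lemma prmxZ m n q (A : 'M[RF K]_(m, n)) : pr q -> prmx A -> prmx (q *: A).
Proof. by move=> hq hA i j; rewrite mxE; apply: prM. Qed.
Lemma prspmxM m n k (A : 'M[RF K]_(m, n)) (B : 'M[RF K]_(n, k)) :
  prmx A -> spmx B -> spmx (A *m B).
Proof. by move=> hA hB i j; rewrite mxE; apply: sum_sp => l _; apply: prspM. Qed.
Lemma spprmxM m n k (A : 'M[RF K]_(m, n)) (B : 'M[RF K]_(n, k)) :
  spmx A -> prmx B -> spmx (A *m B).
Proof. by move=> hA hB i j; rewrite mxE; apply: sum_sp => l _; apply: spprM. Qed.
Lemma prmxM m n k (A : 'M[RF K]_(m, n)) (B : 'M[RF K]_(n, k)) :
  prmx A -> prmx B -> prmx (A *m B).
Proof. by move=> hA hB i j; rewrite mxE; apply: sum_pr => l _; apply: prM. Qed.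
Lemma prmx_constF m n (A : 'M[K]_(m, n)) : prmx (constF A).
Proof. by move=> i j; rewrite mxE; apply: prC. Qed.

Lemma pip_mxP m n (M : 'M[RF K]_(m, n)) : spmx (M - polyF (pip_mx M)).
Proof. by move=> i j; rewrite !mxE; apply: pipP. Qed.
Lemma pip_mx_uniq m n (M : 'M[RF K]_(m, n)) R : spmx (M - polyF R) -> pip_mx M = R.
Proof.
move=> h; apply/matrixP => i j; rewrite mxE; apply: pip_uniq.
by have := h i j; rewrite !mxE.
Qed.

Lemma polyFM m n k (A : 'M[{poly K}]_(m, n)) (B : 'M_(n, k)) :
  polyF (A *m B) = polyF A *m polyF B.
Proof. exact: map_mxM. Qed.
Lemma polyF0 m n : polyF (0 : 'M[{poly K}]_(m, n)) = 0.
Proof. exact: map_mx0. Qed.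
Lemma polyF_inj m n : injective (@polyF K m n).
Proof.
move=> A B /matrixP e; apply/matrixP => i j; apply: tof_inj.
by have := e i j; rewrite !mxE.
Qed.

Variables (n : nat) (D : 'M[{poly K}]_n).
Hypothesis hD : \det D != 0.
Local Notation Di := (invmx (polyF D)).

Lemma hDu : polyF D \in unitmx.
Proof. by rewrite unitmxE unitfE det_map_mx tof_neq0. Qed.

Lemma rhoE x : Di *m polyF (rho D x) = polyF (pip_mx (Di *m x)).
Proof. by rewrite /rho polyFM mulmxA mulVmx ?hDu // mul1mx. Qed.

Lemma rho_sp x y : spmx (Di *m (x - y)) -> rho D x = rho D y.
Proof.
move=> h; rewrite /rho; congr (D *m _); apply: pip_mx_uniq.
have -> : Di *m x - polyF (pip_mx (Di *m y))
   = Di *m (x - y) + (Di *m y - polyF (pip_mx (Di *m y))).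
  by rewrite mulmxBr addrA subrK.
by apply: spmxD => //; apply: pip_mxP.
Qed.

Lemma rho_eq_sp x y : rho D x = rho D y -> spmx (Di *m (x - y)).
Proof.
move=> e; have E : pip_mx (Di *m x) = pip_mx (Di *m y).
  by apply: polyF_inj; rewrite -!rhoE e.
have -> : Di *m (x - y) = (Di *m x - polyF (pip_mx (Di *m x)))
    - (Di *m y - polyF (pip_mx (Di *m y))).
  by rewrite E mulmxBr opprB addrA subrK.
by apply: spmxB; apply: pip_mxP.
Qed.

Lemma rho_congr x y q : rho D x = rho D y -> pr q -> rho D (q *: x) = rho D (q *: y).
Proof.
move=> e hq; apply: rho_sp; rewrite -scalerBr -scalemxAr.
by apply: spmxZ => //; apply: rho_eq_sp.
Qed.

Lemma Uact_rho q x : prmx x -> pr q -> Uact D q (rho D x) = rho D (q *: x).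
Proof.
move=> hx hq; rewrite /Uact /rho_pre.
have [_ h2] := epsilon_spec (inhabits 0) (fun y => prmx y /\ rho D y = rho D x)
   (ex_intro _ x (conj hx erefl)).
exact: rho_congr.
Qed.

Lemma iterN k x : prmx x -> iter k (Nmap D) (rho D x) = rho D ((sF K)^-1 ^+ k *: x).
Proof.
move=> hx; elim: k => [|k IH]; first by rewrite expr0 scale1r.
rewrite iterS IH /Nmap Uact_rho ?scalerA -?exprS //; last exact: prsFV.
by apply: prmxZ => //; apply: prX; apply: prsFV.
Qed.

End Mx.

Lemma mxBE (R : zmodType) m n (A B : 'M[R]_(m, n)) i j : (A - B) i j = A i j - B i j.
Proof. by rewrite !mxE. Qed.
Lemma mxDE (R : zmodType) m n (A B : 'M[R]_(m, n)) i j : (A + B) i j = A i j + B i j.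
Proof. by rewrite !mxE. Qed.

Lemma Gcoef_mul (K : fieldType) m p (G : 'M[RF K]_(m, p)) nu (xi : 'cV[K]_p) :
  Gcoef G nu *m xi = map_mx (fun f => (pip f)`_nu) (G *m constF xi).
Proof.
apply/matrixP => i j; rewrite !mxE pip_sum coef_sum; apply: eq_bigr => k _.
by rewrite !mxE pipMC coefMC.
Qed.

Lemma part1 (K : fieldType) (m p n2 : nat)
  (G W2 : 'M[RF K]_(m, p)) (P2 : 'M[RF K]_(m, n2)) (Q2 : 'M[RF K]_(n2, p))
  (D2 : 'M[{poly K}]_n2) :
  sproper_mx W2 -> proper_mx P2 -> proper_mx Q2 -> \det D2 != 0 ->
  G = W2 + P2 *m invmx (polyF D2) *m Q2 ->
  forall nu (xi : 'cV[K]_p),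
    Gcoef G nu *m xi = - Cmap P2 D2 (iter nu (Nmap D2) (Bmap D2 Q2 xi)).
Proof.
move=> hW hP hQ hD eG nu xi.
have hQx : proper_mx (Q2 *m constF xi) by apply: prmxM => //; apply: prmx_constF.
rewrite /Bmap iterN // /Cmap opprK -mulmxA rhoE //.
set Y := invmx (polyF D2) *m _.
have -> : at0_mx (P2 *m polyF (pip_mx Y)) = at0_mx (P2 *m Y).
  apply/matrixP => i j; rewrite !mxE; congr (_.[0]); symmetry; apply: pip_speq.
  have h : sproper_mx (P2 *m (Y - polyF (pip_mx Y))) by apply: prspmxM => //; apply: pip_mxP.
  by have := h i j; rewrite mulmxBr mxBE !mxE.
rewrite /Y -scalemxAr -scalemxAr Gcoef_mul eG mulmxDl -!mulmxA.
have h : sproper_mx (W2 *m constF xi) by apply: spprmxM => //; apply: prmx_constF.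
set M := P2 *m _; set WX := W2 *m _.
apply/matrixP => i j; rewrite !mxE pip_shift; apply: (congr1 (fun q : {poly K} => q`_nu)).
apply: pip_speq; rewrite addrK.
by have := h i j; rewrite mxE.
Qed.

Lemma Cmap0 (K : fieldType) m n (P : 'M[RF K]_(m, n)) D : Cmap P D 0 = 0.
Proof.
by apply/matrixP => i j; rewrite /Cmap polyF0 mulmx0 !mxE pip0 horner0 oppr0.
Qed.

Lemma monvec0 (K : fieldType) m nu : monvec (0 : 'cV[K]_m) nu = 0.
Proof. by apply/matrixP => i j; rewrite !mxE mul0r. Qed.
Lemma monvecN (K : fieldType) m (c : 'cV[K]_m) nu : monvec (- c) nu = - monvec c nu.
Proof. by apply/matrixP => i j; rewrite !mxE polyCN mulNr. Qed.

Lemma sum_widen (V : zmodType) (F : nat -> V) a b :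
  (a <= b)%N -> (forall i, (a <= i)%N -> F i = 0) ->
  \sum_(i < a) F i = \sum_(i < b) F i.
Proof.
move=> hab hz; rewrite (big_ord_widen _ _ hab) big_mkcond; apply: eq_bigr => i _.
by case: ifP => // /negbT; rewrite -leqNgt => /hz ->.
Qed.

Theorem mainTheorem6 (K : fieldType) (m p n2 t : nat)
  (G W2 : 'M[RF K]_(m, p)) (P2 : 'M[RF K]_(m, n2)) (Q2 : 'M[RF K]_(n2, p))
  (D2 : 'M[{poly K}]_n2) :
  sproper_mx W2 -> proper_mx P2 -> proper_mx Q2 -> \det D2 != 0 ->
  G = W2 + P2 *m invmx (polyF D2) *m Q2 ->
  (* pi_+ G = \sum_{nu=0}^t G_nu s^nu *)
  (forall nu, (t < nu)%N -> Gcoef G nu = 0) ->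
  [/\ (forall nu, (nu <= t)%N -> forall xi : 'cV[K]_p,
         Gcoef G nu *m xi = - Cmap P2 D2 (iter nu (Nmap D2) (Bmap D2 Q2 xi))),
      (exists k, forall v, inU D2 v -> iter k (Nmap D2) v = 0) &
      (forall k, (forall v, inU D2 v -> iter k (Nmap D2) v = 0) ->
       forall xi : 'cV[K]_p,
         \sum_(nu < t.+1) monvec (Gcoef G nu *m xi) nu
         = - \sum_(nu < k) monvec (Cmap P2 D2 (iter nu (Nmap D2) (Bmap D2 Q2 xi))) nu)].
Proof.
move=> hW hP hQ hD eG hG.
have P1 := part1 hW hP hQ hD eG.
split.
- by move=> nu _; apply: P1.
- exists (\max_(i < n2) \max_(j < n2) size (\adj D2 i j)).
  move=> v [x [hx <-]]; rewrite iterN //.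
  set k := (\max_(i < n2) _)%N.
  rewrite /rho; have -> : pip_mx (invmx (polyF D2) *m ((sF K)^-1 ^+ k *: x)) = 0.
    apply: pip_mx_uniq; rewrite polyF0 subr0.
    rewrite /invmx hDu // -scalemxAl.
    apply: spmxZ.
      rewrite det_map_mx; exists 1, (\det D2); split=> //; split.
        by rewrite size_poly1 size_poly_gt0.
      by rewrite mul1r.
    rewrite -scalemxAr scalemxAl.
    apply: spprmxM => // i j; rewrite mxE -map_mx_adj mxE.
    apply: sp_polyX; apply: (leq_trans _ (leq_bigmax i)).
    exact: leq_bigmax.
  by rewrite mulmx0.
- move=> k hk xi.
  have hQx : proper_mx (Q2 *m constF xi) by apply: prmxM => //; apply: prmx_constF.
  set F := fun nu : nat => monvec (Gcoef G nu *m xi) nu.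
  rewrite -sumrN.
  have -> : \sum_(nu < k) - monvec (Cmap P2 D2 (iter nu (Nmap D2) (Bmap D2 Q2 xi))) nu
          = \sum_(nu < k) F nu.
    by apply: eq_bigr => i _; rewrite -monvecN -P1.
  rewrite (@sum_widen _ F t.+1 (t.+1 + k)) ?leq_addr //; last first.
    by move=> i hi; rewrite /F hG // mul0mx monvec0.
  rewrite (@sum_widen _ F k (t.+1 + k)) ?leq_addl //.
  move=> i hi; rewrite /F P1 -(subnKC hi) iterD /Bmap iterN //.
  rewrite hk ?Cmap0 ?oppr0 ?monvec0 //.
  exists ((sF K)^-1 ^+ (i - k) *: (Q2 *m constF xi)); split=> //.
  by apply: prmxZ => //; apply: prX; apply: prsFV.
Qed.
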